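(* Let $\Omega\subseteq\mathcal{A}_n$ be a closed set which is uniformly transversally star-shaped with respect to $S\in\mathcal{A}_n$. Then for every $R\in\Omega$, the tensor $R+\alpha(S-R)$ lies in the interior of $\Omega$ for all $\alpha\in(0,1)$.
   Context: $\mathcal{A}_n$ is the (finite-dimensional Euclidean) space of algebraic curvature tensors on $\mathbb{R}^n$, i.e. symmetric bilinear forms on $\Lambda^2\mathbb{R}^n$ satisfying the first Bianchi identity, with scalar product $\langle R,S\rangle=\mathrm{tr}(R\circ S)$. A closed $\Omega\subseteq\mathcal{A}_n$ is uniformly transversally star-shaped with respect to $S$ if for every compact $K\subseteq\mathcal{A}_n$ there is $r>0$ such that for every $R\in K\cap\partial\Omega$ there is $\varepsilon_0>0$ with $R+\varepsilon B_r(S-R)\subseteq\Omega$ for all $\varepsilon\in[0,\varepsilon_0)$, where $B_r(v)$ is the open ball of radius $r$ around $v$. *)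

(* Defs.v *)
From HB Require Import structures.
From mathcomp Require Import all_boot all_order all_algebra.
From mathcomp Require Import reals.
Set Implicit Arguments. Unset Strict Implicit. Unset Printing Implicit Defensive.
Import Order.TTheory GRing.Theory Num.Theory.
Local Open Scope ring_scope.

(* 4-tensors on R^n, written in coordinates w.r.t. the standard basis:
   T i j k l = T(e_i, e_j, e_k, e_l). *)
Definition tensor4 (R : realType) (n : nat) := 'I_n -> 'I_n -> 'I_n -> 'I_n -> R.

Section Defs.
Variables (R : realType) (n : nat).
Implicit Types (T U : tensor4 R n) (P : tensor4 R n -> Prop).

Definition taddT T U : tensor4 R n := fun i j k l => T i j k l + U i j k l.
Definition tsubT T U : tensor4 R n := fun i j k l => T i j k l - U i j k l.
Definition tscaleT (a : R) T : tensor4 R n := fun i j k l => a * T i j k l.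

(* Algebraic curvature tensors: symmetric bilinear forms on Lambda^2 R^n
   (R(x^y, z^w) with skew-symmetry in each pair and pair symmetry),
   satisfying the first Bianchi identity. *)
Definition is_act T : Prop :=
  [/\ forall i j k l, T i j k l = - T j i k l,
      forall i j k l, T i j k l = - T i j l k,
      forall i j k l, T i j k l = T k l i j &
      forall i j k l, T i j k l + T j k i l + T k i j l = 0].

(* <T,U> = tr(T o U), T,U viewed as self-adjoint operators on Lambda^2 R^n
   with the orthonormal basis (e_i ^ e_j)_{i<j}. *)
Definition actdot T U : R :=
  \sum_(i < n) \sum_(j < n) \sum_(k < n) \sum_(l < n)
    (if (i < j)%N && (k < l)%N then T i j k l * U i j k l else 0).

Definition actnorm T : R := Num.sqrt (actdot T T).

Definition actball V (r : R) : tensor4 R n -> Prop :=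
  fun W => is_act W /\ actnorm (tsubT W V) < r.

Definition act_open P : Prop :=
  forall T, is_act T -> P T -> exists2 r : R, 0 < r & forall W, actball T r W -> P W.

Definition act_closed P : Prop :=
  forall T, is_act T ->
    (forall r : R, 0 < r -> exists W, actball T r W /\ P W) -> P T.

Definition act_interior P : tensor4 R n -> Prop :=
  fun T => is_act T /\ exists2 r : R, 0 < r & forall W, actball T r W -> P W.

Definition act_boundary P : tensor4 R n -> Prop :=
  fun T => is_act T /\
    forall r : R, 0 < r ->
      (exists W, actball T r W /\ P W) /\ (exists W, actball T r W /\ ~ P W).

Definition act_compact (K : tensor4 R n -> Prop) : Prop :=
  (forall T, K T -> is_act T) /\
  forall (I : Type) (Uf : I -> tensor4 R n -> Prop),
    (forall i, act_open (Uf i)) ->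
    (forall T, K T -> exists i, Uf i T) ->
    exists (m : nat) (f : 'I_m -> I), forall T, K T -> exists j : 'I_m, Uf (f j) T.

Definition act_cone_in P Rt S (eps r : R) : Prop :=
  forall V, actball (tsubT S Rt) r V -> P (taddT Rt (tscaleT eps V)).

Definition unif_transv_star_shaped P S : Prop :=
  forall K : tensor4 R n -> Prop, act_compact K ->
    exists2 r : R, 0 < r &
      forall Rt, K Rt -> act_boundary P Rt ->
        exists2 eps0 : R, 0 < eps0 &
          forall eps : R, 0 <= eps -> eps < eps0 -> act_cone_in P Rt S eps r.

End Defs.

(* Main.v *)
Require Import Defs.
From mathcomp Require Import all_boot all_order all_algebra.
From mathcomp Require Import reals.
From mathcomp Require Import boolp classical_sets.
From mathcomp Require Import ring lra.
Import Order.TTheory GRing.Theory Num.Theory.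
Local Open Scope ring_scope.

Ltac teq := do 4 (apply: funext => ?); rewrite /taddT /tsubT /tscaleT.

Section Aux.
Variables (R : realType) (n : nat).
Implicit Types (T U : tensor4 R n).

Lemma act_add T U : is_act T -> is_act U -> is_act (taddT T U).
Proof.
case=> h1 h2 h3 h4 [g1 g2 g3 g4]; split=> i j k l; rewrite /taddT.
- by rewrite h1 g1 opprD.
- by rewrite h2 g2 opprD.
- by rewrite h3 g3.
- have := h4 i j k l; have := g4 i j k l; lra.
Qed.

Lemma act_scale a T : is_act T -> is_act (tscaleT a T).
Proof.
case=> h1 h2 h3 h4; split=> i j k l; rewrite /tscaleT.
- by rewrite h1 mulrN.
- by rewrite h2 mulrN.
- by rewrite h3.
- by rewrite -!mulrDr h4 mulr0.
Qed.

Lemma act_sub T U : is_act T -> is_act U -> is_act (tsubT T U).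
Proof.
move=> hT hU; have -> : tsubT T U = taddT T (tscaleT (-1) U).
  by teq; ring.
by apply: act_add => //; apply: act_scale.
Qed.

Lemma actdot_scale a T :
  actdot (tscaleT a T) (tscaleT a T) = a ^+ 2 * actdot T T.
Proof.
rewrite /actdot mulr_sumr; apply: eq_bigr => i _.
rewrite mulr_sumr; apply: eq_bigr => j _.
rewrite mulr_sumr; apply: eq_bigr => k _.
rewrite mulr_sumr; apply: eq_bigr => l _.
case: ifP => _; last by rewrite mulr0.
rewrite /tscaleT; ring.
Qed.

Lemma actnorm_scale a T : actnorm (tscaleT a T) = `|a| * actnorm T.
Proof. by rewrite /actnorm actdot_scale sqrtrM ?sqr_ge0 // sqrtr_sqr. Qed.

Lemma actnorm_ge0 T : 0 <= actnorm T.
Proof. exact: sqrtr_ge0. Qed.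

Lemma actnorm_sub0 T : actnorm (tsubT T T) = 0.
Proof.
have -> : tsubT T T = tscaleT 0 T by teq; ring.
by rewrite actnorm_scale normr0 mul0r.
Qed.

Lemma small3 (a b : R) : 0 < a -> 0 < b -> exists h : R, [/\ 0 < h, h < a & h < b].
Proof.
move=> ha hb; case: (ltP a b) => hab.
- exists (a / 2); split; lra.
- exists (b / 2); split; lra.
Qed.

End Aux.

Section Main.
Variables (R : realType) (n : nat) (Omega : tensor4 R n -> Prop) (S : tensor4 R n).
Hypothesis hact : forall T, Omega T -> is_act T.
Hypothesis hcl : act_closed Omega.
Hypothesis hS : is_act S.
Hypothesis hst : unif_transv_star_shaped Omega S.

Lemma single_compact (Q : tensor4 R n) : is_act Q -> act_compact (fun T => T = Q).
Proof.
move=> hQ; split; first by move=> T ->.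
move=> I Uf _ cov; have [i Hi] := cov Q erefl.
by exists 1%N, (fun _ => i) => T ->; exists ord0.
Qed.

Lemma local_step Q : Omega Q -> exists2 d : R, 0 < d &
  forall e : R, 0 <= e -> e < d -> Omega (taddT Q (tscaleT e (tsubT S Q))).
Proof.
move=> OQ; have aQ := hact _ OQ.
case: (pselect (act_boundary Omega Q)) => hb.
  have [r r0 H] := hst _ (single_compact Q aQ).
  have [e0 e0p He] := H Q erefl hb.
  exists e0 => // e he1 he2; apply: (He e he1 he2).
  by split; [apply: act_sub | rewrite actnorm_sub0].
have [r0 r0p Hr] : exists2 r0 : R, 0 < r0 & forall W, actball Q r0 W -> Omega W.
  apply: contrapT => hn; apply: hb; split=> // r rp; split.
    by exists Q; split=> //; split=> //; rewrite actnorm_sub0.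
  apply: contrapT => hn2; apply: hn; exists r => // W HW.
  by apply: contrapT => hW; apply: hn2; exists W.
set N := actnorm (tsubT S Q).
have N0 : 0 <= N by apply: actnorm_ge0.
exists (r0 / (N + 1)); first by apply: divr_gt0 => //; lra.
move=> e he1 he2; apply: Hr; split.
  by apply: act_add => //; apply: act_scale; apply: act_sub.
have -> : tsubT (taddT Q (tscaleT e (tsubT S Q))) Q = tscaleT e (tsubT S Q).
  by teq; ring.
rewrite actnorm_scale ger0_norm // -/N.
rewrite ltr_pdivlMr in he2; last lra.
nra.
Qed.


Definition seg (P : tensor4 R n) (s : R) := taddT P (tscaleT s (tsubT S P)).

Lemma segment P : Omega P -> forall t : R, 0 <= t -> t <= 1 -> Omega (seg P t).
Proof.
move=> OP; have aP := hact _ OP.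
have seg0 : seg P 0 = P by rewrite /seg; teq; ring.
have aseg : forall s, is_act (seg P s).
  by move=> s; apply: act_add => //; apply: act_scale; apply: act_sub.
set N := actnorm (tsubT S P).
have N0 : 0 <= N by apply: actnorm_ge0.
have segd : forall s s', actnorm (tsubT (seg P s) (seg P s')) = `|s - s'| * N.
  move=> s s'; rewrite -actnorm_scale; congr actnorm; rewrite /seg; teq; ring.
pose E : set R := fun t => 0 <= t /\ t <= 1 /\ forall s, 0 <= s -> s <= t -> Omega (seg P s).
have E0 : E 0.
  split; first lra. split; first lra.
  move=> s h1 h2; have -> : s = 0 by lra.
  by rewrite seg0.
have hsE : has_sup E.
  split; first by exists 0.
  by exists 1 => x [hx [hx' _]]; lra.
set m := sup E.
have m0 : 0 <= m by apply: sup_upper_bound.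
have m1 : m <= 1.
  by apply: ge_sup; [exists 0 | move=> x [hx [hx' _]]; lra].
have H1 : forall s, 0 <= s -> s < m -> Omega (seg P s).
  move=> s hs hsm; have ms : 0 < m - s by lra.
  have [e [_ [_ He]] he] := sup_adherent ms hsE.
  rewrite -/m in he; apply: He => //; lra.
have H2 : Omega (seg P m).
  apply: hcl; first exact: aseg.
  move=> r rp; case: (eqVneq m 0) => hm.
    by exists (seg P m); split; [split; [|rewrite actnorm_sub0]|rewrite hm seg0].
  have mp : 0 < m by rewrite lt_neqAle eq_sym hm.
  have rN : 0 < r / (N + 1) by apply: divr_gt0 => //; lra.
  have [h [hp hm' hr]] := @small3 R _ _ mp rN.
  exists (seg P (m - h)); split; last by apply: H1; lra.
  split; first exact: aseg.
  rewrite segd; have -> : m - h - m = - h by ring.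
  rewrite normrN gtr0_norm //.
  rewrite ltr_pdivlMr in hr; last lra.
  nra.
have H3 : forall s, 0 <= s -> s <= m -> Omega (seg P s).
  move=> s hs; rewrite le_eqVlt => /orP [/eqP -> //|]; exact: H1.
have m_eq : m = 1.
  apply/eqP; rewrite eq_le m1 /=; apply/negP => /negP; rewrite -ltNge => hm1.
  have [d dp Hd] := local_step _ H2.
  have [h [hp hd h1]] := @small3 R _ _ dp ltr01.
  have : E (m + h * (1 - m)).
    split; first nra. split; first nra.
    move=> s hs hsm; case: (leP s m) => hsm'; first exact: H3.
    set e := (s - m) / (1 - m).
    have hm1' : 1 - m != 0 by rewrite subr_eq0 eq_sym (lt_eqF hm1).
    have se : s = m + e * (1 - m) by rewrite /e mulfVK //; ring.
    have e0 : 0 <= e by apply: divr_ge0; lra.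
    have ed : e < d.
      rewrite /e ltr_pdivrMr; last lra.
      nra.
    have := Hd e e0 ed.
    have -> : taddT (seg P m) (tscaleT e (tsubT S (seg P m))) = seg P s.
      by rewrite /seg se; teq; ring.
    done.
  move=> /sup_upper_bound-/(_ hsE); rewrite -/m; nra.
move=> t t0 t1; apply: H3 => //; lra.
Qed.


Lemma finish C rho t : is_act C -> 0 < rho ->
  (forall Y, is_act Y -> actnorm Y < rho -> Omega (taddT C Y)) ->
  0 <= t -> t < 1 -> act_interior Omega (seg C t).
Proof.
move=> aC rp HY t0 t1.
have t1' : 0 < 1 - t by lra.
split; first by apply: act_add => //; apply: act_scale; apply: act_sub.
exists ((1 - t) * rho); first exact: mulr_gt0.
move=> W [aW hW]; set Y := tsubT W (seg C t).
have -> : W = taddT (seg C t) Y by rewrite /Y /seg; teq; ring.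
set Y' := tscaleT (1 - t)^-1 Y.
have aY : is_act Y by apply: act_sub => //; apply: act_add => //; apply: act_scale; apply: act_sub.
have aY' : is_act Y' by apply: act_scale.
have : Omega (taddT C Y').
  apply: HY => //; rewrite /Y' actnorm_scale gtr0_norm ?invr_gt0 //.
  by rewrite -(ltr_pM2l t1') mulrA mulfV ?mul1r // gt_eqF.
move=> /segment => /(_ t t0 (ltW t1)).
have tn : 1 - t != 0 by rewrite gt_eqF.
have -> : seg (taddT C Y') t = taddT (seg C t) Y.
  by rewrite /seg /Y'; teq; field.
done.
Qed.

Lemma main_sec Rt : Omega Rt -> forall alpha : R, 0 < alpha -> alpha < 1 ->
  act_interior Omega (taddT Rt (tscaleT alpha (tsubT S Rt))).
Proof.
move=> OR a a0 a1; have aR := hact _ OR.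
change (act_interior Omega (seg Rt a)).
case: (pselect (act_boundary Omega Rt)) => hb.
  have [r r0 H] := hst _ (single_compact Rt aR).
  have [e0 e0p He] := H Rt erefl hb.
  have [e [ep ea ee0]] := @small3 R _ _ a0 e0p.
  have e1 : 1 - e != 0 by rewrite gt_eqF // subr_gt0; lra.
  have en : e != 0 by rewrite gt_eqF.
  have -> : seg Rt a = seg (seg Rt e) ((a - e) / (1 - e)).
    by rewrite /seg; teq; field.
  apply: (@finish _ (e * r) _).
  - by apply: act_add => //; apply: act_scale; apply: act_sub.
  - exact: mulr_gt0.
  - move=> Y aY hY; set V := taddT (tsubT S Rt) (tscaleT e^-1 Y).
    have : Omega (taddT Rt (tscaleT e V)).
      apply: (He e (ltW ep) ee0); split.
        by apply: act_add; [apply: act_sub | apply: act_scale].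
      have -> : tsubT V (tsubT S Rt) = tscaleT e^-1 Y by rewrite /V; teq; ring.
      rewrite actnorm_scale gtr0_norm ?invr_gt0 //.
      by rewrite -(ltr_pM2l ep) mulrA mulfV ?mul1r.
    have -> : taddT Rt (tscaleT e V) = taddT (seg Rt e) Y.
      by rewrite /V /seg; teq; field.
    done.
  - by apply: divr_ge0; lra.
  - by rewrite ltr_pdivrMr ?mul1r; lra.
have [r0 r0p Hr] : exists2 r0 : R, 0 < r0 & forall W, actball Rt r0 W -> Omega W.
  apply: contrapT => hn; apply: hb; split=> // r rp; split.
    by exists Rt; split=> //; split=> //; rewrite actnorm_sub0.
  apply: contrapT => hn2; apply: hn; exists r => // W HW.
  by apply: contrapT => hW; apply: hn2; exists W.
apply: (@finish _ r0 _) => //; last exact: ltW.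
move=> Y aY hY; apply: Hr; split; first exact: act_add.
by have -> : tsubT (taddT Rt Y) Rt = Y by teq; ring.
Qed.

End Main.

Theorem lemma4p6 (R : realType) (n : nat) (Omega : tensor4 R n -> Prop)
    (S : tensor4 R n) :
  (forall T, Omega T -> is_act T) ->
  act_closed Omega ->
  is_act S ->
  unif_transv_star_shaped Omega S ->
  forall Rt : tensor4 R n, Omega Rt ->
  forall alpha : R, 0 < alpha -> alpha < 1 ->
    act_interior Omega (taddT Rt (tscaleT alpha (tsubT S Rt))).
Proof. move=> h1 h2 h3 h4; exact: main_sec. Qed.
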